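(* Let $X$ and $Y$ be jointly spacelike slices (i.e. $X\cup Y$ is spacelike). Then the presheaf $(X\vee Y)(-):\mathsf{Slice}^{op}\to\mathsf{Set}$ is representable (namely by the slice $X\cup Y$).
   Context: Fix a connected, time-orientable Lorentzian manifold $\mathcal{M}$ with a fixed time-orientation (no further causality assumptions). A causal curve is an equivalence class, up to monotone reparametrisation, of smooth regular paths $\mu:\iota\to\mathcal{M}$ ($\iota\subseteq\mathbb{R}$ an interval) whose tangent is everywhere timelike or null; it is future-directed if the tangent is everywhere future-directed. Write $x\prec y$ if $x=y$ or there is a future-directed causal curve from $x$ to $y$. A region $A\subseteq\mathcal{M}$ is spacelike if no two distinct points $x,y\in A$ satisfy $x\prec y$. A slice is a closed spacelike subset of $\mathcal{M}$; slices $X,Y$ are jointly spacelike if $X\cup Y$ is spacelike. For regions $A,B$, $\mathcal{C}[A,B]$ is the set of future-directed causal curves passing through $A$ and then $B$: for a representative path $\mu:\iota\to\mathcal{M}$, there exists $q\in\iota$ with $\mu(q)\in B$, and for every such $q$ there exists $p\le q$ with $\mu(p)\in A$. The category $\mathsf{Slice}$ has slices as objects, $\mathsf{Slice}(X,Y)=\mathcal{P}(\mathcal{C}[X,Y])$ (the powerset), composition $T\circ S:=T\cap S$, identities $1_X=\mathcal{C}[X,X]$. For slices $X,Y$, $(X\vee Y)(-)$ is the presheaf with $(X\vee Y)(Z):=\mathcal{P}(\mathcal{C}[Z,X]\cup\mathcal{C}[Z,Y])$ and $(X\vee Y)(U:Z'\to Z):C\mapsto C\cap U$. *)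

(* Defs.v *)
From HB Require Import structures.
From mathcomp Require Import all_boot all_order all_algebra.
From mathcomp Require Import all_classical all_reals all_analysis.
Set Implicit Arguments. Unset Strict Implicit. Unset Printing Implicit Defensive.
Import Order.TTheory GRing.Theory Num.Theory.
Local Open Scope classical_set_scope.
Local Open Scope ring_scope.

(* A spacetime, seen through its causal paths.  [fd_path I mu] means:
   I is an interval of R and mu restricted to I is a smooth regular path
   whose tangent is everywhere future-directed timelike or null, for the
   fixed Lorentzian metric and time-orientation of the manifold.
   Differential geometry is not available in the libraries, so the
   smooth/Lorentzian structure is abstracted to this predicate together with
   the only structural facts about it that we record: paths live on
   intervals, and restricting to a non-empty subinterval keeps the path a
   future-directed causal path. *)
Record spacetime (R : realType) := Spacetime {
  st_pt :> topologicalType;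
  st_connected : connected [set: st_pt];
  fd_path : set R -> (R -> st_pt) -> Prop;
  fd_path_interval : forall I mu, fd_path I mu -> is_interval I;
  fd_path_restr : forall I J mu, fd_path I mu -> is_interval J ->
     J `<=` I -> J !=set0 -> fd_path J mu }.

Section Causal.
Variables (R : realType) (M : spacetime R).

Record curve := Curve {
  c_dom : set R;
  c_path : R -> M;
  c_fd : fd_path c_dom c_path }.

Definition prec (x y : M) : Prop :=
  x = y \/ exists c : curve, exists p q, c_dom c p /\ c_dom c q /\ p <= q /\
      c_path c p = x /\ c_path c q = y.

Definition spacelike (A : set M) : Prop :=
  forall x y, A x -> A y -> x <> y -> ~ prec x y.

Definition is_slice (A : set M) : Prop := closed A /\ spacelike A.

Record slice := Slice { sl_set :> set M; sl_ok : is_slice sl_set }.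

Definition Ccurves (A B : set M) : set curve :=
  [set c | (exists q, c_dom c q /\ B (c_path c q)) /\
           forall q, c_dom c q -> B (c_path c q) ->
             exists p, c_dom c p /\ p <= q /\ A (c_path c p)].

(* Slice(X,Y) = powerset of C[X,Y] *)
Definition hom (X Y : slice) := {S : set curve | S `<=` Ccurves X Y}.

Lemma Ccurves_trans (X Y Z : set M) :
  Ccurves Y Z `&` Ccurves X Y `<=` Ccurves X Z.
Proof.
move=> c [[hZ HZ] [_ HY]]; split => // q dq zq.
have [p [dp [pq yp]]] := HZ q dq zq.
have [r [dr [rp xr]]] := HY p dp yp.
by exists r; split => //; split => //; apply: le_trans rp pq.
Qed.

Definition comp (X Y Z : slice) (T : hom Y Z) (S : hom X Y) : hom X Z :=
  exist (fun S0 => S0 `<=` Ccurves X Z) (proj1_sig T `&` proj1_sig S)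
    (fun c '(conj tc sc) => Ccurves_trans (conj (proj2_sig T c tc) (proj2_sig S c sc))).

Definition veeP (X Y Z : slice) :=
  {C : set curve | C `<=` Ccurves Z X `|` Ccurves Z Y}.

Definition vee_map (X Y Z Z' : slice) (U : hom Z' Z) (C : veeP X Y Z) : veeP X Y Z' :=
  exist (fun C0 => C0 `<=` Ccurves Z' X `|` Ccurves Z' Y) (proj1_sig C `&` proj1_sig U)
    (fun c '(conj cc uc) =>
       match proj2_sig C c cc with
       | or_introl h => or_introl (Ccurves_trans (conj h (proj2_sig U c uc)))
       | or_intror h => or_intror (Ccurves_trans (conj h (proj2_sig U c uc)))
       end).

Definition represents (X Y W : slice) : Prop :=
  exists phi : forall Z : slice, hom Z W -> veeP X Y Z,
    (forall Z, bijective (phi Z)) /\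
    (forall (Z Z' : slice) (U : hom Z' Z) (S : hom Z W),
        phi Z' (comp S U) = vee_map U (phi Z S)).

End Causal.

(* Main.v *)
Require Import Defs.
From mathcomp Require Import all_boot all_order all_algebra.
From mathcomp Require Import all_classical all_reals all_analysis.
Import Order.TTheory GRing.Theory Num.Theory.
Local Open Scope classical_set_scope.

Lemma sig_ext (A : Type) (P : A -> Prop) (x y : {a | P a}) :
  proj1_sig x = proj1_sig y -> x = y.
Proof.
case: x => a pa; case: y => b pb /= eab; subst b.
by rewrite (Prop_irrelevance pa pb).
Qed.

Section Aux.
Variables (R : realType) (M : spacetime R).

Lemma Cunion (X Y Z : set M) (hXY : spacelike (X `|` Y)) :
  Ccurves Z (X `|` Y) = Ccurves Z X `|` Ccurves Z Y.
Proof.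
have key : forall c : curve M, forall q1 q2, c_dom c q1 -> c_dom c q2 ->
    (X `|` Y) (c_path c q1) -> (X `|` Y) (c_path c q2) ->
    c_path c q1 = c_path c q2.
  move=> c q1 q2 d1 d2 h1 h2.
  case: (pselect (c_path c q1 = c_path c q2)) => // ne.
  exfalso.
  have [le12|le21] : (q1 <= q2)%R \/ (q2 <= q1)%R.
    by by case: (leP q1 q2) => h; [left|right; apply: ltW].
  - apply: (hXY _ _ h1 h2 ne); right; exists c, q1, q2; by do !split.
  - apply: (hXY _ _ h2 h1 (fun e => ne (esym e))); right; exists c, q2, q1; by do !split.
apply/seteqP; split => c.
- move=> [[q [dq hq]] H].
  case: (pselect (exists q, c_dom c q /\ X (c_path c q))) => [[q' [dq' hq']]|nX].
    left; split; first by exists q'.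
    by move=> r dr xr; apply: H => //; left.
  right; split.
    exists q; split => //; case: hq => // xq; exfalso; apply: nX; by exists q.
  by move=> r dr yr; apply: H => //; right.
- case=> [[[q [dq hq]] H]|[[q [dq hq]] H]]; split.
  + by exists q; split => //; left.
  + move=> r dr hr; apply: H => //.
    by rewrite (key c r q dr dq hr (or_introl hq)).
  + by exists q; split => //; right.
  + move=> r dr hr; apply: H => //.
    by rewrite (key c r q dr dq hr (or_intror hq)).
Qed.
End Aux.

Lemma sub1 (R : realType) (M : spacetime R) (X Y Z : set M) (hXY : spacelike (X `|` Y))
  (S : set (curve M)) : S `<=` Ccurves Z (X `|` Y) -> S `<=` Ccurves Z X `|` Ccurves Z Y.
Proof. by rewrite (@Cunion R M X Y Z hXY). Qed.

Lemma sub2 (R : realType) (M : spacetime R) (X Y Z : set M) (hXY : spacelike (X `|` Y))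
  (S : set (curve M)) : S `<=` Ccurves Z X `|` Ccurves Z Y -> S `<=` Ccurves Z (X `|` Y).
Proof. by rewrite (@Cunion R M X Y Z hXY). Qed.

Theorem mainTheorem13 (R : realType) (M : spacetime R) (X Y : slice M)
  (hXY : spacelike (X `|` Y)) :
  exists W : slice M, sl_set W = X `|` Y /\ represents X Y W.
Proof.
have hW : is_slice (X `|` Y).
  split => //; apply: closedU; [exact: (sl_ok X).1 | exact: (sl_ok Y).1].
exists (Slice hW); split => //.
pose phi (Z : slice M) (S : Defs.hom Z (Slice hW)) : veeP X Y Z :=
  exist (fun C0 => C0 `<=` Ccurves Z X `|` Ccurves Z Y) (proj1_sig S)
    (@sub1 R M X Y Z hXY _ (proj2_sig S)).
pose psi (Z : slice M) (C : veeP X Y Z) : Defs.hom Z (Slice hW) :=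
  exist (fun S0 => S0 `<=` Ccurves Z (X `|` Y)) (proj1_sig C)
    (@sub2 R M X Y Z hXY _ (proj2_sig C)).
exists phi; split.
- move=> Z; exists (psi Z) => x; exact: sig_ext.
- move=> Z Z' U S; exact: sig_ext.
Qed.
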